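(* Let $X$ be a Hausdorff space and $A\in\mathcal{F}(X)$. The following are equivalent: (a) $A$ is a $P$-point of $\mathcal{F}(X)$; (b) $A$ is a $P$-point of $\mathcal{F}_n(X)$ for each positive integer $n\geq|A|$; (c) every $x\in A$ is a $P$-point of $X$.
   Context: $\mathcal{F}(X)$ is the set of nonempty finite subsets of $X$ and $\mathcal{F}_n(X)$ the set of nonempty subsets with at most $n$ points, both with the Vietoris topology (generated by $U^+=\{A: A\subset U\}$ and $U^-=\{A: A\cap U\neq\emptyset\}$ for $U$ open in $X$). A point $p$ of a space $Z$ is a $P$-point if $p$ lies in the interior of every $G_\delta$ subset of $Z$ containing $p$. *)

(* Defs.v *)
From HB Require Import structures.
From mathcomp Require Import all_boot all_order all_algebra.
From mathcomp Require Import all_classical all_reals all_analysis.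
Set Implicit Arguments. Unset Strict Implicit. Unset Printing Implicit Defensive.
Local Open Scope classical_set_scope.
Local Open Scope card_scope.

(* Vietoris topology on the type [set X] of all subsets of X, generated by the
   subbasic sets U^+ = [set A | A `<=` U] and U^- = [set A | A `&` U !=set0],
   U open in X.  A basic open set is a finite intersection of subbasic sets:
   U_0^+, ..., U_{m-1}^+, V_0^-, ..., V_{k-1}^-. *)
Definition vietoris_basic (X : topologicalType) (m k : nat) (U V : nat -> set X)
  : set (set X) :=
  [set A | (forall i, (i < m)%N -> A `<=` U i) /\
           (forall j, (j < k)%N -> A `&` V j !=set0)].

Definition vietoris_open (X : topologicalType) (W : set (set X)) : Prop :=
  forall A, W A -> exists m k (U V : nat -> set X),
    [/\ (forall i, (i < m)%N -> open (U i)),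
        (forall j, (j < k)%N -> open (V j)),
        vietoris_basic m k U V A &
        vietoris_basic m k U V `<=` W].

Definition Fin (X : Type) : set (set X) := [set A | finite_set A /\ A !=set0].

Definition Fin_n (X : Type) (n : nat) : set (set X) :=
  [set A | A !=set0 /\ (A #<= `I_n)].

(* p is a P-point of the subspace Z of a space T whose open sets are given by
   [op]: p lies in the (relative) interior of every G_delta subset of Z
   containing p.  A G_delta subset of Z is Z `&` \bigcap_k O k with each O k
   open in T (countable families are indexed by nat; finite families are
   covered by repetition). *)
Definition P_point (T : Type) (op : set T -> Prop) (Z : set T) (p : T) : Prop :=
  Z p /\
  forall O : nat -> set T, (forall k, op (O k)) -> (forall k, O k p) ->
    exists W, [/\ op W, W p & Z `&` W `<=` Z `&` \bigcap_k O k].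

(* Main.v *)
Require Import Defs.
From HB Require Import structures.
From mathcomp Require Import all_boot all_order all_algebra.
From mathcomp Require Import all_classical all_reals all_analysis.
Local Open Scope classical_set_scope.
Local Open Scope card_scope.
Lemma openPU (X : topologicalType) m (U : nat -> set X) :
  (forall i, (i < m)%N -> open (U i)) -> open [set y | forall i, (i < m)%N -> U i y].
Proof.
elim: m => [|m IH] hU.
  have -> : [set y : X | forall i, (i < 0)%N -> U i y] = setT by apply/seteqP; split.
  exact: openT.
have -> : [set y | forall i, (i < m.+1)%N -> U i y] = [set y | forall i, (i < m)%N -> U i y] `&` U m.
  apply/seteqP; split => y /=.
    by move=> h; split => [i im|]; apply: h => //; apply: ltnW.
  by move=> [h1 h2] i; rewrite ltnS leq_eqVlt => /orP[/eqP->//|]; apply: h1.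
apply: openI; first by apply: IH => i im; apply: hU; apply: ltnW.
exact: hU.
Qed.

Lemma openG (X : topologicalType) m l (U V : nat -> set X) x :
  (forall i, (i < m)%N -> open (U i)) -> (forall j, (j < l)%N -> open (V j)) ->
  open [set y | (forall i, (i < m)%N -> U i y) /\ (forall j, (j < l)%N -> V j x -> V j y)].
Proof.
move=> hU hV.
pose W j := if pselect (V j x) then V j else setT.
have -> : [set y | (forall i, (i < m)%N -> U i y) /\ (forall j, (j < l)%N -> V j x -> V j y)]
  = [set y | forall i, (i < m)%N -> U i y] `&` [set y | forall j, (j < l)%N -> W j y].
  apply/seteqP; split => y [h1 h2]; split => // j jl.
    by rewrite /W; case: pselect => // vx; apply: h2.
  by move=> vx; have := h2 j jl; rewrite /W; case: pselect.
apply: openI; first exact: openPU.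
apply: openPU => j jl; rewrite /W; case: (pselect (V j x)) => ?; [exact: hV|exact: openT].
Qed.

Lemma basic_vopen (X : topologicalType) m k (U V : nat -> set X) :
  (forall i, (i < m)%N -> open (U i)) -> (forall j, (j < k)%N -> open (V j)) ->
  vietoris_open (vietoris_basic m k U V).
Proof. by move=> hU hV B hB; exists m, k, U, V; split. Qed.

Lemma Fin_n_Fin (X : Type) n (B : set X) : Fin_n n B -> Fin B.
Proof. case=> h1 h2; split => //; exact: (card_le_finite h2 (finite_II n)). Qed.
Lemma ab (X : topologicalType) (A : set X) :
  P_point (@vietoris_open X) (@Fin X) A ->
  forall n : nat, (0 < n)%N -> (A #<= `I_n) -> P_point (@vietoris_open X) (@Fin_n X n) A.
Proof.
move=> [FA hP] n n0 An; split.
  by split => //; case: FA.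
move=> O hO OA; have [W [Wo WA sW]] := hP O hO OA.
exists W; split => // B [FB WB]; split => //.
by have [] := sW B (conj (@Fin_n_Fin _ _ _ FB) WB).
Qed.
Lemma bc (X : topologicalType) (hX : hausdorff_space X) (A : set X) (hA : Fin A) :
  (forall n : nat, (0 < n)%N -> (A #<= `I_n) -> P_point (@vietoris_open X) (@Fin_n X n) A) ->
  forall x, A x -> P_point (@open X) setT x.
Proof.
move=> hb x Ax; split => // O hO Ox.
have [FA A0] := hA.
have [n /card_eqPle [An _]] := (finite_setP A).1 FA.
have An1 : A #<= `I_n.+1.
  apply: card_le_trans An _; apply: subset_card_le => i /= /ltnW; exact.
pose Ux := ~` (A `\ x).
have Uxo : open Ux.
  apply: closed_openC.
  have acc := proj1 (@accessible_finite_set_closed X) (@hausdorff_accessible X hX).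
  apply: acc.
  exact: finite_setD.
pose OO k := vietoris_basic 0 1 (fun _ => setT) (fun _ => O k `&` Ux).
have OOo : forall k, vietoris_open (OO k).
  move=> k; apply: basic_vopen => // j _; apply: openI => //.
have OOA : forall k, OO k A.
  move=> k; split => // j _; exists x; split => //; split => //.
  by move=> [_ /=]; apply.
have [_ hP] := hb n.+1 isT An1.
have [W [Wo WA sW]] := hP OO OOo OOA.
have [m [l [U [V [hU hV [bAU bAV] sub]]]]] := Wo A WA.
exists [set y | (forall i, (i < m)%N -> U i y) /\ (forall j, (j < l)%N -> V j x -> V j y)].
split.
- exact: openG.
- by split => // i im; apply: bAU.
move=> y [_ [Gy1 Gy2]]; split => // k _.
pose f z := if pselect (z = x) then y else z.
have fx : f x = y by rewrite /f; case: pselect.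
have fa : forall a, a <> x -> f a = a by move=> a ax; rewrite /f; case: pselect.
have WB : W (f @` A).
  apply: sub; split.
  - move=> i im z [a Aa <-]; case: (pselect (a = x)) => [->|ax].
      by rewrite fx; apply: Gy1.
    by rewrite fa //; apply: bAU.
  - move=> j jl; have [a [Aa Va]] := bAV j jl.
    case: (pselect (a = x)) => [ax|ax].
      by exists y; split; [exists x|apply: Gy2; rewrite -?ax].
    by exists a; split => //; exists a => //; rewrite fa.
have FB : Fin_n n.+1 (f @` A).
  split; first by exists y; exists x.
  exact: card_le_trans (card_image_le f A) An1.
have [_ hB] := sW (f @` A) (conj FB WB).
have [z [[a Aa <-] [Oz Uz]]] := (hB k I).2 0%N isT.
case: (pselect (a = x)) => [ax|ax].
  by move: Oz; rewrite ax fx.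
by exfalso; apply: Uz; rewrite fa.
Qed.
Lemma ca (X : topologicalType) (A : set X) (hA : Fin A) :
  (forall x, A x -> P_point (@open X) setT x) ->
  P_point (@vietoris_open X) (@Fin X) A.
Proof.
move=> hc; split => // O hO OA.
have [FA [x0 Ax0]] := hA.
have hk : forall k, exists p : nat * nat * (nat -> set X) * (nat -> set X),
  [/\ (forall i, (i < p.1.1.1)%N -> open (p.1.2 i)),
      (forall j, (j < p.1.1.2)%N -> open (p.2 j)),
      vietoris_basic p.1.1.1 p.1.1.2 p.1.2 p.2 A &
      vietoris_basic p.1.1.1 p.1.1.2 p.1.2 p.2 `<=` O k].
  move=> k; have [m [l [U [V [h1 h2 h3 h4]]]]] := hO k A (OA k).
  by exists (m, l, U, V).
have [g hg] := choice hk.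
pose G x k := [set y | (forall i, (i < (g k).1.1.1)%N -> (g k).1.2 i y) /\
   (forall j, (j < (g k).1.1.2)%N -> (g k).2 j x -> (g k).2 j y)].
have hx : forall x, exists W : set X, A x -> [/\ open W, W x & W `<=` \bigcap_k G x k].
  move=> x; case: (pselect (A x)) => Ax; last by exists setT.
  have [_ hP] := hc x Ax.
  have [||W [Wo Wx sW]] := hP (G x).
  - move=> k; have [h1 h2 _ _] := hg k; exact: openG.
  - move=> k; have [_ _ [h3 _] _] := hg k; split => // i im; exact: h3.
  exists W => _; split => // y Wy.
  by have [] := sW y (conj I Wy).
have [Wf hW] := choice hx.
have [s hs] := (finite_seqP A).1 FA.
have inA : forall z, A z -> z \in s by move=> z; rewrite hs.
have inA' : forall z, z \in s -> A z by move=> z; rewrite hs.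
pose U0 := fun _ : nat => \bigcup_(x in A) Wf x.
pose V0 := fun j => Wf (nth x0 s j).
exists (vietoris_basic 1 (size s) U0 V0); split.
- apply: basic_vopen.
    move=> i _; apply: bigcup_open => x Ax; by have [] := hW x Ax.
  move=> j js; have [] := hW (nth x0 s j) (inA' _ (mem_nth x0 js)) => //.
- split.
    move=> i _ a Aa; exists a => //; by have [] := hW a Aa.
  move=> j js; have Aj := inA' _ (mem_nth x0 js).
  exists (nth x0 s j); split => //; by have [] := hW _ Aj.
move=> B [FB [hBU hBV]]; split => // k _.
have [_ _ _ sub] := hg k; apply: sub; split.
- move=> i im b Bb; have [x Ax Wb] := hBU 0%N isT b Bb.
  have [_ _ sW] := hW x Ax.
  by have [h _] := sW b Wb k I; apply: h.
- move=> j jl; have [_ _ [_ h3] _] := hg k.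
  have [z [Az Vz]] := h3 j jl.
  have zs := inA z Az.
  have izs : (index z s < size s)%N by rewrite index_mem.
  have [b [Bb Wb]] := hBV (index z s) izs.
  rewrite /V0 nth_index // in Wb.
  have [_ _ sW] := hW z Az.
  have [_ h] := sW b Wb k I.
  by exists b; split => //; apply: h.
Qed.

Theorem proposition2p2 (X : topologicalType) (hX : hausdorff_space X)
  (A : set X) (hA : Fin A) :
  (P_point (@vietoris_open X) (@Fin X) A <->
     (forall n : nat, (0 < n)%N -> (A #<= `I_n) ->
        P_point (@vietoris_open X) (@Fin_n X n) A)) /\
  (P_point (@vietoris_open X) (@Fin X) A <->
     (forall x, A x -> P_point (@open X) setT x)).
Proof.
split; split.
- exact: ab.
- by move=> hb; apply: ca => //; apply: bc.
- by move=> ha; apply: bc => //; apply: ab.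
- exact: ca.
Qed.
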